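(* The set $E(K_4)\times E(K_6)$ can be partitioned into $14$ blocks; that is, $g(K_4,K_6)\le 14<(4-1)(6-1)$.
   Context: $K_m$ is the complete graph on $m$ vertices. A complete bipartite subgraph of a graph $G$ has two disjoint nonempty vertex classes $X,Y$ and edge set all $xy$ with $x\in X,y\in Y$. For graphs $G,H$, a block is a set $E(B_1)\times E(B_2)$ where $B_1$ is a complete bipartite subgraph of $G$ and $B_2$ a complete bipartite subgraph of $H$; $g(G,H)$ is the minimum number of blocks partitioning $E(G)\times E(H)$. *)

(* Defs.v *)
From mathcomp Require Import all_boot.
Set Implicit Arguments. Unset Strict Implicit. Unset Printing Implicit Defensive.

(* A finite simple graph on vertex type V is given by an adjacency relation
   (assumed symmetric and irreflexive where relevant). Edges are the
   2-element vertex sets {u,v} with u adjacent to v. *)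
Definition edges (V : finType) (adj : rel V) : {set {set V}} :=
  [set [set u; v] | u in V, v in [pred w | adj u w]].

Definition Kadj (m : nat) : rel 'I_m := fun x y => x != y.

Definition cbip (V : finType) (adj : rel V) (X Y : {set V}) : bool :=
  [&& X != set0, Y != set0, [disjoint X & Y] &
      [forall x in X, forall y in Y, adj x y]].

Definition cbip_edges (V : finType) (X Y : {set V}) : {set {set V}} :=
  [set [set x; y] | x in X, y in Y].

Definition is_block (V W : finType) (adjG : rel V) (adjH : rel W)
    (B : {set {set V} * {set W}}) : Prop :=
  exists (X1 Y1 : {set V}) (X2 Y2 : {set W}),
    [/\ cbip adjG X1 Y1, cbip adjH X2 Y2 &
        B = setX (cbip_edges X1 Y1) (cbip_edges X2 Y2)].

Definition block_partition (V W : finType) (adjG : rel V) (adjH : rel W)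
    (P : {set {set {set V} * {set W}}}) : Prop :=
  partition P (setX (edges adjG) (edges adjH)) /\
  (forall B, B \in P -> is_block adjG adjH B).

(* Main.v *)
Require Import Defs.
From mathcomp Require Import all_boot.

Set Implicit Arguments. Unset Strict Implicit. Unset Printing Implicit Defensive.

Definition dat : seq (seq nat * seq nat * seq nat * seq nat) :=
  [:: ([:: 0; 1], [:: 2; 3], [:: 0; 2], [:: 5]);
      ([:: 0; 1], [:: 2; 3], [:: 1; 2], [:: 3]);
      ([:: 0], [:: 1], [:: 0; 1; 2], [:: 3; 5]);
      ([:: 2], [:: 3], [:: 0; 1; 2], [:: 3; 5]);
      ([:: 0; 2], [:: 1; 3], [:: 1], [:: 0; 4]);
      ([:: 0; 2], [:: 1; 3], [:: 3], [:: 4; 5]);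
      ([:: 0], [:: 2], [:: 1; 3], [:: 0; 4; 5]);
      ([:: 1], [:: 3], [:: 1; 3], [:: 0; 4; 5]);
      ([:: 0; 3], [:: 1; 2], [:: 0; 1], [:: 2]);
      ([:: 0; 3], [:: 1; 2], [:: 4], [:: 0; 2; 5]);
      ([:: 0], [:: 3], [:: 0], [:: 2; 3; 4]);
      ([:: 0], [:: 3], [:: 1; 4], [:: 2; 5]);
      ([:: 1], [:: 2], [:: 0], [:: 2; 3; 4]);
      ([:: 1], [:: 2], [:: 1; 4], [:: 2; 5])].

Definition dd (k : nat) := nth ([::], [::], [::], [::]) dat k.
Definition dX1 k := (dd k).1.1.1.
Definition dY1 k := (dd k).1.1.2.
Definition dX2 k := (dd k).1.2.
Definition dY2 k := (dd k).2.

Definition Sn (n : nat) (l : seq nat) : {set 'I_n} := [set x : 'I_n | nat_of_ord x \in l].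

Definition wf_sides (n : nat) (x y : seq nat) : bool :=
  [&& x != [::], y != [::], all (fun a => a < n) x, all (fun a => a < n) y &
      all (fun a => a \notin y) x].

Definition chk1 : bool :=
  all (fun k => wf_sides 4 (dX1 k) (dY1 k) && wf_sides 6 (dX2 k) (dY2 k)) (iota 0 14).

Definition bm (k u v p q : nat) : bool :=
  ((u \in dX1 k) && (v \in dY1 k) || (v \in dX1 k) && (u \in dY1 k)) &&
  ((p \in dX2 k) && (q \in dY2 k) || (q \in dX2 k) && (p \in dY2 k)).

Definition chk2 : bool :=
  all (fun u => all (fun v => all (fun p => all (fun q =>
    (u != v) && (p != q) ==>
      has (fun k => bm k u v p q) (iota 0 14) &&
      all (fun i => all (fun j => bm i u v p q && bm j u v p q ==> (i == j))
             (iota 0 14)) (iota 0 14))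
    (iota 0 6)) (iota 0 6)) (iota 0 4)) (iota 0 4).

Lemma chk1_ok : chk1. Proof. vm_compute. reflexivity. Qed.
Lemma chk2_ok : chk2. Proof. vm_compute. reflexivity. Qed.

Lemma Sn_disj n x y : all (fun a => a \notin y) x -> [disjoint Sn n x & Sn n y].
Proof.
move=> H; rewrite disjoint_subset; apply/subsetP => z; rewrite !inE => zx.
exact: (allP H _ zx).
Qed.

Lemma Sn_n0 n x : x != [::] -> all (fun a => a < n) x -> Sn n x != set0.
Proof.
case: x => [//|a x] _ /andP[ha _]; apply/set0Pn; exists (Ordinal ha).
by rewrite inE /= mem_head.
Qed.

Lemma cbip_Sn n x y : wf_sides n x y -> cbip (@Kadj n) (Sn n x) (Sn n y).
Proof.
case/and5P => hx hy ax ay dxy.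
rewrite /cbip Sn_n0 // Sn_n0 // Sn_disj //=.
apply/forallP => a; apply/implyP => ha; apply/forallP => b; apply/implyP => hb.
rewrite /Kadj; apply/eqP => eab; subst b.
by rewrite (disjointFr (Sn_disj n dxy) ha) in hb.
Qed.

Lemma mem_cbip n (X Y : {set 'I_n}) (u v : 'I_n) : [disjoint X & Y] ->
  ([set u; v] \in cbip_edges X Y) = ((u \in X) && (v \in Y)) || ((v \in X) && (u \in Y)).
Proof.
move=> dXY; apply/imset2P/idP.
- case=> x y hx hy e.
  have hxy : x != y.
    apply/eqP => exy; subst y.
    by rewrite (disjointFr dXY hx) in hy.
  have ux : u \in [set x; y] by rewrite -e set21.
  have vx : v \in [set x; y] by rewrite -e set22.
  have xu : x \in [set u; v] by rewrite e set21.
  have yu : y \in [set u; v] by rewrite e set22.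
  case/set2P: ux => eu; case/set2P: vx => ev; subst u v.
  + by move: yu; rewrite !inE orbb eq_sym (negbTE hxy).
  + by rewrite hx hy.
  + by rewrite hx hy orbT.
  + by move: xu; rewrite !inE orbb (negbTE hxy).
- case/orP => /andP [hu hv].
  + by exists u v.
  + by exists v u => //; rewrite setUC.
Qed.

Lemma cbip_form n (X Y : {set 'I_n}) e : [disjoint X & Y] -> e \in cbip_edges X Y ->
  exists u v : 'I_n, u != v /\ e = [set u; v].
Proof.
move=> dXY /imset2P [x y hx hy ->]; exists x, y; split => //.
apply/eqP => exy; subst y.
by rewrite (disjointFr dXY hx) in hy.
Qed.

Lemma mem_edges n (e : {set 'I_n}) : e \in edges (@Kadj n) ->
  exists u v : 'I_n, u != v /\ e = [set u; v].
Proof. by case/imset2P => u v _; rewrite inE => huv ->; exists u, v. Qed.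

Lemma edges_mem n (u v : 'I_n) : u != v -> [set u; v] \in edges (@Kadj n).
Proof. by move=> h; apply/imset2P; exists u v; rewrite ?inE. Qed.

Lemma cbip_n0 n (X Y : {set 'I_n}) : X != set0 -> Y != set0 -> cbip_edges X Y != set0.
Proof.
case/set0Pn => x hx; case/set0Pn => y hy; apply/set0Pn; exists [set x; y].
by apply/imset2P; exists x y.
Qed.

Definition fB (k : 'I_14) : {set {set 'I_4} * {set 'I_6}} :=
  setX (cbip_edges (Sn 4 (dX1 k)) (Sn 4 (dY1 k)))
       (cbip_edges (Sn 6 (dX2 k)) (Sn 6 (dY2 k))).

Lemma wfk (k : 'I_14) : wf_sides 4 (dX1 k) (dY1 k) && wf_sides 6 (dX2 k) (dY2 k).
Proof.
have := allP chk1_ok k; rewrite mem_iota /=; apply; exact: ltn_ord.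
Qed.

Lemma disj1 (k : 'I_14) : [disjoint Sn 4 (dX1 k) & Sn 4 (dY1 k)].
Proof. by case/andP: (wfk k) => /and5P [_ _ _ _ h] _; apply: Sn_disj. Qed.
Lemma disj2 (k : 'I_14) : [disjoint Sn 6 (dX2 k) & Sn 6 (dY2 k)].
Proof. by case/andP: (wfk k) => _ /and5P [_ _ _ _ h]; apply: Sn_disj. Qed.

Lemma mem_fB (k : 'I_14) (u v : 'I_4) (p q : 'I_6) :
  (([set u; v], [set p; q]) \in fB k) = bm k u v p q.
Proof. by rewrite in_setX !mem_cbip ?disj1 ?disj2 // !inE. Qed.

Lemma cell_unique (u v : 'I_4) (p q : 'I_6) : u != v -> p != q ->
  (exists k : 'I_14, bm k u v p q) /\
  (forall i j : 'I_14, bm i u v p q -> bm j u v p q -> i = j).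
Proof.
move=> huv hpq.
have H := allP chk2_ok u; rewrite mem_iota ltn_ord in H.
have {}H := allP (H isT) v; rewrite mem_iota ltn_ord in H.
have {}H := allP (H isT) p; rewrite mem_iota ltn_ord in H.
have {}H := allP (H isT) q; rewrite mem_iota ltn_ord in H.
have huv' : (nat_of_ord u != nat_of_ord v) by [].
have hpq' : (nat_of_ord p != nat_of_ord q) by [].
move: (H isT); rewrite huv' hpq' andbT implyTb => /andP [hh ha]; split.
- case/hasP: hh => k; rewrite mem_iota /= => hk hb.
  by exists (Ordinal hk).
- move=> i j hi hj; apply: val_inj => /=.
  have := allP ha i; rewrite mem_iota ltn_ord => /(_ isT) hi'.
  have := allP hi' j; rewrite mem_iota ltn_ord => /(_ isT).
  by rewrite hi hj /= => /eqP.
Qed.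

Lemma fB_form (k : 'I_14) c : c \in fB k ->
  exists (u v : 'I_4) (p q : 'I_6), [/\ u != v, p != q & c = ([set u; v], [set p; q])].
Proof.
case: c => e1 e2; rewrite in_setX => /andP [h1 h2].
have [u [v [huv ->]]] := cbip_form (disj1 k) h1.
have [p [q [hpq ->]]] := cbip_form (disj2 k) h2.
by exists u, v, p, q.
Qed.

Theorem mainTheorem8 :
  (exists P : {set {set {set 'I_4} * {set 'I_6}}},
      block_partition (@Kadj 4) (@Kadj 6) P /\ #|P| = 14)
  /\ 14 < (4 - 1) * (6 - 1).
Proof.
split => //.
pose P := [set fB k | k in [set: 'I_14]].
have hdisj : {in [set: 'I_14] &, forall i j, j != i -> [disjoint fB i & fB j]}.
  move=> i j _ _ hji; rewrite disjoint_subset; apply/subsetP => c hc.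
  rewrite inE; apply/negP => hc'.
  have [u [v [p [q [huv hpq ec]]]]] := fB_form hc; subst c.
  rewrite mem_fB in hc; rewrite mem_fB in hc'.
  have [_ U] := cell_unique huv hpq.
  by rewrite (U _ _ hc hc') eqxx in hji.
have hn0 : forall i, i \in [set: 'I_14] -> fB i != set0.
  move=> i _; case/andP: (wfk i) => /and5P [a1 b1 c1 d1 _] /and5P [a2 b2 c2 d2 _].
  have /set0Pn [e1 he1] := cbip_n0 (Sn_n0 a1 c1) (Sn_n0 b1 d1).
  have /set0Pn [e2 he2] := cbip_n0 (Sn_n0 a2 c2) (Sn_n0 b2 d2).
  by apply/set0Pn; exists (e1, e2); rewrite in_setX he1 he2.
have [hpart hinj] := indexed_partition hdisj hn0.
have hcov : cover P = setX (edges (@Kadj 4)) (edges (@Kadj 6)).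
  rewrite /P cover_imset; apply/setP => -[e1 e2]; rewrite in_setX.
  apply/bigcupP/idP.
  - case=> k _ h.
    have [u [v [p [q [huv hpq [-> ->]]]]]] := fB_form h.
    by rewrite !edges_mem.
  - case/andP => /mem_edges [u [v [huv ->]]] /mem_edges [p [q [hpq ->]]].
    have [[k hk] _] := cell_unique huv hpq.
    by exists k => //; rewrite mem_fB.
exists P; split; last first.
  by rewrite /P card_in_imset // cardsT card_ord.
split; first by rewrite -hcov.
move=> B /imsetP [k _ ->].
case/andP: (wfk k) => w1 w2.
exists (Sn 4 (dX1 k)), (Sn 4 (dY1 k)), (Sn 6 (dX2 k)), (Sn 6 (dY2 k)).
by split; [apply: cbip_Sn | apply: cbip_Sn | ].
Qed.
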